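(* Let $K$ be a field of prime characteristic $p$, $C$ a cyclic $p$-group of order $q>1$, $\tilde C$ its subgroup of index $p$, and $A\in R_{KC}$ with $A\in\mathbb{Z}\{V_p,V_{2p},\dots,V_q\}$. (i) If $A\!\downarrow_{\tilde C}=0$ then $A=0$. (ii) If $A\!\downarrow_{\tilde C}\in\mathbb{Z}\tilde V_{q/p}$ then $A\in\mathbb{Z}V_q$.
   Context: The indecomposable $KC$-modules up to isomorphism are $V_1,\dots,V_q$ with $\dim V_r=r$, and those of $K\tilde C$ are $\tilde V_1,\dots,\tilde V_{q/p}$ with $\dim\tilde V_s=s$. $R_{KC}$ and $R_{K\tilde C}$ are the Green rings (bases these indecomposables, addition from direct sum, multiplication from tensor product). $A\mapsto A\!\downarrow_{\tilde C}$ is the ring homomorphism $R_{KC}\to R_{K\tilde C}$ induced by restriction of modules. *)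

(* Defs.v *)
From mathcomp Require Import all_boot all_order all_algebra.
Set Implicit Arguments. Unset Strict Implicit. Unset Printing Implicit Defensive.
Import GRing.Theory.
Local Open Scope ring_scope.

(* Model: C = <g> cyclic of order q, Ctilde = <g^p>.
   A KC-module of dimension n is given by the matrix of g.
   V_r = K[g]/(g-1)^r : g acts by the unipotent Jordan block of size r. *)

Definition shift_mx (K : fieldType) (n : nat) : 'M[K]_n :=
  \matrix_(i < n, j < n) (i.+1 == j :> nat)%:R.

Definition Vgen (K : fieldType) (r : nat) : 'M[K]_r := 1%:M + shift_mx K r.

Definition res_gen (K : fieldType) (p r : nat) : 'M[K]_r := Vgen K r ^+ p.

(* For a nilpotent N, number of Jordan blocks of size >= s (s >= 1) *)
Definition nblocks_ge (K : fieldType) (n : nat) (N : 'M[K]_n) (s : nat) : nat :=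
  (\rank (N ^+ s.-1) - \rank (N ^+ s))%N.

Definition jordan_mult (K : fieldType) (n : nat) (N : 'M[K]_n) (s : nat) : nat :=
  (nblocks_ge N s - nblocks_ge N s.+1)%N.

(* multiplicity of the indecomposable KCtilde-module Vtilde_s
   (g^p acting by a unipotent Jordan block of size s) in V_r restricted to Ctilde,
   i.e. number of Jordan blocks of size s of (g^p - 1) on V_r *)
Definition res_mult (K : fieldType) (p r s : nat) : nat :=
  jordan_mult (res_gen K p r - 1%:M) s.

(* An element A = \sum_{r=1}^q c r * V_r of the Green ring R_KC is encoded by
   its coefficient function c (only c 1, ..., c q are relevant).
   res_coef K p q c s = coefficient of Vtilde_s in A restricted to Ctilde. *)
Definition res_coef (K : fieldType) (p q : nat) (c : nat -> int) (s : nat) : int :=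
  \sum_(1 <= r < q.+1) c r * (res_mult K p r s)%:Z.

(* Main.v *)
Require Import Defs.
From mathcomp Require Import all_boot all_order all_fingroup all_algebra zify.
Import GRing.Theory.
Local Open Scope ring_scope.

Lemma shift_exp (K : fieldType) r k :
  shift_mx K r ^+ k = \matrix_(i < r, j < r) (i + k == j)%N%:R.
Proof.
elim: k => [|k IH].
  apply/matrixP=> i j; rewrite expr0 !mxE addn0.
  by [].
apply/matrixP=> i j; rewrite exprSr IH !mxE.
case: (ltnP (i + k) r) => hik.
  rewrite (bigD1 (Ordinal hik)) //= !mxE eqxx mul1r big1 ?addr0.
    by rewrite addnS.
  move=> l /eqP hl; rewrite !mxE.
  case: ((i + k)%N =P l) => h; last by rewrite mul0r.
  by exfalso; apply: hl; apply: val_inj; rewrite /= h.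
rewrite big1.
  case: ((i + k.+1)%N =P j) => h //; have := ltn_ord j; lia.
move=> l _; rewrite !mxE; case: ((i + k)%N =P l) => h; last by rewrite mul0r.
have := ltn_ord l; lia.
Qed.

Section Rot.
Variables (r k : nat).
Hypothesis hk : (k <= r)%N.
Definition rotf (j : 'I_r) : 'I_r :=
  Ordinal (ltn_pmod (j + (r - k)) (leq_ltn_trans (leq0n j) (ltn_ord j))).
Definition rotg (j : 'I_r) : 'I_r :=
  Ordinal (ltn_pmod (j + k) (leq_ltn_trans (leq0n j) (ltn_ord j))).
Lemma rotK : cancel rotf rotg.
Proof.
move=> j; apply: val_inj => /=.
rewrite modnDml -addnA subnK // -modnDmr modnn addn0 modn_small //.
Qed.
Lemma rotf_inj : injective rotf.
Proof. exact: can_inj rotK. Qed.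
End Rot.

Lemma rank_shift_exp (K : fieldType) r k :
  \rank (shift_mx K r ^+ k) = (r - k)%N.
Proof.
case: (leqP k r) => hk; last first.
  rewrite shift_exp (_ : \matrix_(_,_) _ = 0) ?mxrank0; first lia.
  apply/matrixP => i j; rewrite !mxE.
  case: ((i + k)%N =P j) => h //; have := ltn_ord j; lia.
have -> : shift_mx K r ^+ k = col_perm (perm ((@rotf_inj r k hk))) (pid_mx (r - k)).
  rewrite shift_exp; apply/matrixP => i j; rewrite !mxE permE /=.
  congr (_%:R); congr (nat_of_bool _).
  case: ((i + k)%N =P j) => hij.
    symmetry; apply/andP; split; last by have := ltn_ord j; lia.
    rewrite -hij; apply/eqP.
    by rewrite -addnA subnKC // -modnDmr modnn addn0 modn_small.
  symmetry; apply/negbTE/negP; case/andP=> /eqP hi hlt; apply: hij.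
  have := @rotK r k hk j; move/(congr1 val) => /=; rewrite -hi => <-.
  by rewrite modn_small //; lia.
by rewrite col_permE mxrankMfree ?row_free_unit ?unitmx_perm // rank_pid_mx // leq_subr.
Qed.

Lemma res_gen_sub1 (K : fieldType) p r : prime p -> p \in [pchar K] ->
  res_gen K p r - 1%:M = shift_mx K r ^+ p.
Proof.
case: p => [|[|p']] // pp pc; rewrite /res_gen /Vgen -[1%:M]/(1 : 'M[K]_r) [1 + _]addrC exprD1n big_ord_recr /= big_ord_recl /=.
rewrite big1 ?add0r.
  by rewrite expr0 bin0 binn !mulr1n addr0 addrAC subrr add0r.
move=> i _; rewrite -scaler_nat.
have : (p'.+2 %| 'C(p'.+2, (bump 0 i)))%N by apply: prime_dvd_bin => //=; rewrite /bump /=; have := ltn_ord i; lia.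
case/dvdnP=> t ->; rewrite natrM (pcharf0 pc) mulr0 scale0r //.
Qed.

Lemma res_mult_mp (K : fieldType) p m s : prime p -> p \in [pchar K] -> (0 < s)%N ->
  res_mult K p (m * p) s = ((s == m) * p)%N.
Proof.
move=> pp pc s0; rewrite /res_mult /jordan_mult /nblocks_ge res_gen_sub1 //.
rewrite -!exprM !rank_shift_exp /= (mulnC m) -!mulnBr mulnC.
congr (_ * _)%N.
case: (s =P m) => h /=; lia.
Qed.

Lemma res_coef_s (K : fieldType) p q (c : nat -> int) s :
  prime p -> p \in [pchar K] ->
  (forall r : nat, (0 < r <= q)%N -> ~~ (p %| r)%N -> c r = 0) ->
  (0 < s)%N -> (s * p <= q)%N ->
  res_coef K p q c s = c (s * p)%N * (p%:Z).
Proof.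
move=> pp pc hc s0 sq; rewrite /res_coef (bigD1_seq (s * p)%N) /=; last first.
- exact: iota_uniq.
- rewrite mem_index_iota; apply/andP; split; last by rewrite ltnS.
  by rewrite muln_gt0 s0 prime_gt0.
rewrite res_mult_mp // eqxx mul1n big1_seq ?addr0 //.
move=> r /andP [hr]; rewrite mem_index_iota => /andP [r1 rq].
have [/dvdnP [m hm]|nd] := boolP (p %| r)%N.
  rewrite hm res_mult_mp //.
  case: (s =P m) => [hsm|_]; last by rewrite mul0n mulr0.
  by move: hr; rewrite hm hsm eqxx.
by rewrite hc ?mul0r // r1 -ltnS.
Qed.

Theorem lemma4p1 (K : fieldType) (p n : nat) (c : nat -> int) :
  prime p -> p \in [pchar K] -> (0 < n)%N ->
  let q := (p ^ n)%N in
  (forall r : nat, (0 < r <= q)%N -> ~~ (p %| r)%N -> c r = 0) ->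
  ((forall s : nat, (0 < s <= q %/ p)%N -> res_coef K p q c s = 0) ->
     forall r : nat, (0 < r <= q)%N -> c r = 0) /\
  ((forall s : nat, (0 < s < q %/ p)%N -> res_coef K p q c s = 0) ->
     forall r : nat, (0 < r < q)%N -> c r = 0).
Proof.
move=> pp pc n0 q hc.
have p0 : (0 < p)%N := prime_gt0 pp.
have hq : q = (p ^ n.-1 * p)%N by rewrite /q -expnSr prednK.
have hqp : (q %/ p)%N = (p ^ n.-1)%N by rewrite hq mulnK.
have key : forall m, (0 < m)%N -> (m * p <= q)%N -> res_coef K p q c m = 0 ->
    c (m * p)%N = 0.
  move=> m m0 mq; rewrite res_coef_s // => /eqP; rewrite mulf_eq0 => /orP [/eqP //|].
  by rewrite eqz_nat => /eqP hp0; move: p0; rewrite hp0.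
split=> H r /andP [r0 rq].
  have [/dvdnP [m hm]|nd] := boolP (p %| r)%N; last by apply: hc => //; rewrite r0.
  have m0 : (0 < m)%N by move: r0; rewrite hm muln_gt0 => /andP [].
  rewrite hm; apply: key => //; first by rewrite -hm.
  apply: H; rewrite m0 hqp -(leq_pmul2r p0) -hq -hm //.
have [/dvdnP [m hm]|nd] := boolP (p %| r)%N; last by apply: hc => //; rewrite r0 ltnW.
have m0 : (0 < m)%N by move: r0; rewrite hm muln_gt0 => /andP [].
rewrite hm; apply: key => //; first by rewrite -hm ltnW.
apply: H; rewrite m0 hqp -(ltn_pmul2r p0) -hq -hm //.
Qed.
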